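(* Let $c\in\mathbb{C}^n$, let $\rho(z)=z+c$ be the corresponding translation of $\mathbb{C}^{n}$, let $d\geq 1$ be an integer, and let $V\subseteq\mathcal{O}_{d}(\mathbb{C}^{n})$ be a complex linear subspace such that $g\circ\rho=g$ for every $g\in V$. If \[ \dim V \geq \dim\mathcal{O}_{d}(\mathbb{C}^{n})-\binom{n+d-1}{d-1}+1, \] then $c=0$.
   Context: $\mathcal{O}_d(\mathbb{C}^n)$ denotes the space of holomorphic functions $f$ on $\mathbb{C}^n$ with $|f(z)|\leq C(1+|z|)^d$ for some constant $C$; equivalently, the space of polynomials on $\mathbb{C}^n$ of degree at most $d$, which has dimension $\binom{n+d}{d}$. *)

(* Defs.v *)
From HB Require Import structures.
From mathcomp Require Import all_boot all_order all_algebra.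
From mathcomp Require Import Rstruct.
From mathcomp.real_closed Require Import complex.
From mathcomp.multinomials Require Import mpoly.
Set Implicit Arguments. Unset Strict Implicit. Unset Printing Implicit Defensive.
Import GRing.Theory Num.Theory.
Local Open Scope ring_scope.

Definition CC : Type := (Rdefinitions.R)[i].

(* O_d(C^n): polynomials on C^n of (total) degree at most d.
   msize p = 1 + total degree of p (and 0 for p = 0). *)
Definition Od (n d : nat) (p : {mpoly CC[n]}) : Prop := (msize p <= d.+1)%N.

Definition is_subspace (n : nat) (V : {mpoly CC[n]} -> Prop) : Prop :=
  V 0 /\ forall (a : CC) (u v : {mpoly CC[n]}), V u -> V v -> V (a *: u + v).

Definition lin_indep (n k : nat) (g : 'I_k -> {mpoly CC[n]}) : Prop :=
  forall a : 'I_k -> CC, \sum_(i < k) a i *: g i = 0 -> forall i, a i = 0.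

Definition dim_ge (n : nat) (V : {mpoly CC[n]} -> Prop) (k : nat) : Prop :=
  exists g : 'I_k -> {mpoly CC[n]}, (forall i, V (g i)) /\ lin_indep g.

Definition transl (n : nat) (c : 'I_n -> CC) (z : 'I_n -> CC) : 'I_n -> CC :=
  fun i => z i + c i.

Definition transl_invariant (n : nat) (c : 'I_n -> CC) (g : {mpoly CC[n]}) : Prop :=
  forall z : 'I_n -> CC, g.@[transl c z] = g.@[z].

(* Main.v *)
Require Import Defs.
From HB Require Import structures.
From mathcomp Require Import all_boot all_order all_algebra.
From mathcomp Require Import Rstruct.
From mathcomp.real_closed Require Import complex.
From mathcomp.multinomials Require Import mpoly.
Import GRing.Theory Num.Theory.
Local Open Scope ring_scope.

Lemma poly_nat_roots (P : {poly CC}) : (forall N : nat, P.[N%:R] = 0) -> P = 0.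
Proof.
move=> H; apply: (@roots_geq_poly_eq0 _ P [seq (i%:R : CC) | i <- iota 0 (size P)]).
- by apply/allP => x /mapP [i _ ->]; apply/rootP.
- rewrite map_inj_uniq ?iota_uniq // => a b /eqP; rewrite eqr_nat => /eqP.
  done.
- by rewrite size_map size_iota.
Qed.
Lemma evalzero_gen (n k : nat) (s : seq 'X_{1..n}) (a : 'X_{1..n} -> CC) :
  uniq s ->
  (forall m m', m \in s -> m' \in s -> forall i : 'I_n, (k <= i)%N -> m i = m' i) ->
  (forall v : 'I_n -> CC, \sum_(m <- s) a m * \prod_(i < n | (i < k)%N) v i ^+ m i = 0) ->
  forall m, m \in s -> a m = 0.
Proof.
elim: k s => [|k IH] s us Hag Hs m ms.
  have E : \sum_(m' <- s) a m' = a m.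
    rewrite (bigD1_seq m ms us) /= big_seq_cond big1 ?addr0 // => m' /andP[m's /eqP []].
    by apply/mnmP => i; apply: Hag.
  rewrite -E -[RHS](Hs (fun _ => 0)); apply: eq_bigr => m' _.
  by rewrite big_pred0 ?mulr1.
case: (ltnP k n) => [kn|nk]; last first.
  apply: (IH s us _ _ m ms).
    move=> m1 m2 m1s m2s i ki; by move: (leq_trans (ltn_ord i) nk); rewrite ltnNge ki.
  move=> v; rewrite -[RHS](Hs v); apply: eq_bigr => m' _; congr (_ * _).
  apply: eq_bigl => i; have ik : (i < k)%N := leq_trans (ltn_ord i) nk.
  by rewrite ik ltnS ltnW.
pose ko : 'I_n := Ordinal kn.
pose e := m ko.
pose se := [seq m' <- s | (m' : 'X_{1..n}) ko == e].
have mse : m \in se by rewrite mem_filter eqxx.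
apply: (IH se (filter_uniq _ us) _ _ m mse).
  move=> m1 m2; rewrite !mem_filter => /andP[/eqP e1 m1s] /andP[/eqP e2 m2s] i.
  rewrite leq_eqVlt => /orP[/eqP ki|ki].
    have -> : i = ko by apply: val_inj.
    by rewrite e1 e2.
  exact: Hag.
move=> v.
pose P : {poly CC} := \sum_(m' <- s) (a m' * \prod_(i < n | (i < k)%N) v i ^+ m' i) *: 'X^(m' ko).
have P0 : P = 0.
  apply: poly_nat_roots => N.
  rewrite -(Hs (fun i => if i == ko then N%:R else v i)).
  rewrite horner_sum; apply: eq_bigr => m' _.
  rewrite hornerZ hornerXn -mulrA; congr (_ * _).
  rewrite [in RHS](bigD1 ko) /=; last by rewrite ltnS leqnn.
  rewrite eqxx mulrC; congr (_ * _).
  apply: eq_big => [i|i ik].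
    by rewrite ltn_neqAle andbC -val_eqE.
  by rewrite ifN // -val_eqE /= neq_ltn ik.
have := congr1 (fun p : {poly CC} => p`_e) P0.
rewrite coef0 /P coef_sum => E.
apply: (etrans _ E); rewrite big_filter big_mkcond /=; apply: eq_bigr => m' _.
rewrite coefZ coefXn eq_sym; case: ifP => _; by rewrite ?mulr1 ?mulr0.
Qed.

Lemma eval_zero (n : nat) (p : {mpoly CC[n]}) : (forall v, p.@[v] = 0) -> p = 0.
Proof.
move=> H; apply/mpolyP => m; rewrite mcoeff0.
case: (boolP (m \in msupp p)) => [ms|]; last exact: memN_msupp_eq0.
apply: (@evalzero_gen n n (msupp p) (fun m => p@_m) (msupp_uniq p) _ _ m ms).
  by move=> m1 m2 _ _ i; rewrite leqNgt ltn_ord.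
move=> v; rewrite -[RHS](H v) mevalE; apply: eq_bigr => m' _; congr (_ * _).
by apply: eq_bigl => i; rewrite ltn_ord.
Qed.

Lemma line_inv n (c : 'I_n -> CC) g : transl_invariant c g ->
  forall z t, g.@[fun i => z i + t * c i] = g.@[z].
Proof.
move=> H z t.
pose P : {poly CC} := \sum_(m <- msupp g) g@_m *: \prod_(i < n) ((z i)%:P + c i *: 'X) ^+ m i.
have HP s : P.[s] = g.@[fun i => z i + s * c i].
  rewrite mevalE horner_sum; apply: eq_bigr => m _.
  rewrite hornerZ horner_prod; congr (_ * _); apply: eq_bigr => i _.
  by rewrite horner_exp hornerD hornerC hornerZ hornerX mulrC.
have HN (N : nat) : g.@[fun i => z i + N%:R * c i] = g.@[z].
  elim: N => [|N IHN].
    by apply: meval_eq => i; rewrite mul0r addr0.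
  rewrite -[RHS]IHN -[RHS](H (fun i => z i + N%:R * c i)).
  by apply: meval_eq => i; rewrite /transl mulrSr mulrDl mul1r addrA.
have : P - (g.@[z])%:P = 0.
  by apply: poly_nat_roots => N; rewrite hornerD hornerN hornerC HP HN subrr.
move/eqP; rewrite subr_eq0 => /eqP E.
by rewrite -HP E hornerC.
Qed.

Lemma key n (c : 'I_n -> CC) (j : 'I_n) g : c j != 0 -> transl_invariant c g ->
  (forall m : 'X_{1..n}, m j = 0%N -> g@_m = 0) -> g = 0.
Proof.
move=> cj H Hm; apply: eval_zero => z.
rewrite -(@line_inv n c g H z (- z j / c j)).
rewrite mevalE big1 // => m _.
case: (eqVneq (m j) 0%N) => [/Hm -> | mj]; first by rewrite mul0r.
rewrite (bigD1 j) //= divfK // subrr expr0n (negbTE mj) mul0r mulr0.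
done.
Qed.

Lemma comp_le_mdeg n (m : 'X_{1..n}) k : (m k <= mdeg m)%N.
Proof. by rewrite mdegE (bigD1 k) //= leq_addr. Qed.

Theorem lemma4p2 (n : nat) (c : 'I_n -> CC) (d : nat) (V : {mpoly CC[n]} -> Prop) :
  (1 <= d)%N ->
  is_subspace V ->
  (forall g, V g -> Od d g) ->
  (forall g, V g -> transl_invariant c g) ->
  dim_ge V ('C(n + d, d) - 'C(n + d - 1, d - 1) + 1)%N ->
  forall i, c i = 0.
Proof.
move=> d1 _ Vdeg Vinv [g [Vg gind]] i.
apply/eqP; apply/negPn/negP => ci.
move: ci; move: i; move: gind; move: Vg; move: g; move: Vinv; move: Vdeg; move: V; move: c.
case: n => [|n'] c V Vdeg Vinv g Vg gind i ci; first by have := ltn_ord i.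
move: gind; move: Vg; move: g; move: Vdeg; move: d1.
case: d => [|d'] d1 Vdeg g Vg gind; first by [].
set Kn := (_ + 1)%N in g Vg gind.
pose T := [set t : n'.-tuple 'I_d'.+2 | (\sum_(x <- t) x <= d'.+1)%N].
have cardT : #|T| = 'C(n' + d'.+1, d'.+1).
  rewrite card_partial_ord_partitions.
  by have := bin_sub (leq_addl n' d'.+1); rewrite addnK.
have eK : Kn = ('C(n' + d'.+1, d'.+1) + 1)%N.
  by rewrite /Kn addSn binS subn1 /= subn1 /= addnK.
pose mono (t : n'.-tuple 'I_d'.+2) : 'X_{1..n'.+1} :=
  [multinom (if unlift i k is Some l then val (tnth t l) else 0%N) | k < n'.+1].
pose A : 'M[CC]_(Kn, #|T|) := \matrix_(r, col) (g r)@_(mono (enum_val col)).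
have ltTK : (#|T| < Kn)%N by rewrite cardT eK addn1.
have : kermx A != 0.
  rewrite kermx_eq0 /row_free; apply/negP => /eqP rf.
  by have := rank_leq_col A; rewrite rf leqNgt ltTK.
case/rowV0Pn => v /sub_kermxP vA vn0.
pose h := \sum_(r < Kn) v 0 r *: g r.
have hinv : transl_invariant c h.
  move=> z; rewrite /h !raddf_sum; apply: eq_bigr => r _.
  by rewrite /= !mevalZ Vinv.
have hcoef : forall m : 'X_{1..n'.+1}, m i = 0%N -> h@_m = 0.
  move=> m mi0; rewrite /h raddf_sum /=.
  have E : forall r, (v 0 r *: g r)@_m = v 0 r * (g r)@_m by move=> r; rewrite mcoeffZ.
  under eq_bigr => r _ do rewrite E.
  case: (leqP (mdeg m) d'.+1) => [md|md]; last first.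
    apply: big1 => r _; rewrite memN_msupp_eq0 ?mulr0 //; apply: msize_mdeg_ge.
    exact: leq_trans (Vdeg _ (Vg r) : (msize (g r) <= d'.+2)%N) md.
  pose t := [tuple (inord (m (lift i l)) : 'I_d'.+2) | l < n'].
  have tl l : val (tnth t l) = m (lift i l).
    rewrite tnth_mktuple /= inordK // ltnS.
    exact: leq_trans (@comp_le_mdeg _ m _) md.
  have tT : t \in T.
    rewrite inE big_tuple.
    under eq_bigr => l _ do rewrite tl.
    apply: leq_trans md; rewrite mdegE (bigD1_ord i) //= leq_addl //.
  have mt : mono t = m.
    apply/mnmP => k; rewrite mnmE; case: unliftP => [l ->|->]; last by rewrite mi0.
    by rewrite tl.
  have := congr1 (fun M : 'M[CC]_(1, #|T|) => M 0 (enum_rank_in tT t)) vA.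
  rewrite !mxE => E2; apply: (etrans _ E2); apply: eq_bigr => r _.
  by rewrite mxE (enum_rankK_in tT tT) mt.
have h0 := @key _ c i h ci hinv hcoef.
have := gind (fun r => v 0 r) h0 => v0.
by apply: (negP vn0); apply/eqP/rowP => r; rewrite mxE v0.
Qed.
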